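(* Let $p$ be a complex polynomial and $c\in\mathbb C\setminus\{0\}$. (i) If there exists $\alpha\in\mathbb C$ with $|\alpha|<1$, $\alpha p'(\alpha)+cp(\alpha)=0$ and $|p(\alpha)-1|<1$, then $\mathrm D(p,c)\neq\{0\}$ and $\big[N,-\frac ic\log p(L)\big]=-i\mathbf 1$ on $\mathrm D(p,c)$. (ii) If $p$ is not of the form $p(x)=bx^m$ with $b\in\mathbb C$, $m\in\mathbb N$, then any subspace $\mathcal D\subset \mathcal E\cap\mathrm D(N\log p(L))\cap\mathrm D(\log p(L)N)$ such that $[N,\log p(L)]\varphi=c\varphi$ for all $\varphi\in\mathcal D$ is finite-dimensional, where $\mathcal E$ is the set of $\varphi\in\ell^2$ for which $\sum_{k=1}^\infty\frac1kN(\mathbf1-p(L))^k\varphi$ converges.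
   Context: $\ell^2=\ell^2(\mathbb N)$, $\mathbb N=\{0,1,\dots\}$, basis $(\xi_n)$; $N\xi_n=n\xi_n$ (self-adjoint, maximal domain); $L$ is the left shift $L\xi_n=\xi_{n-1}$, $L\xi_0=0$; $p(L)$ is the bounded operator obtained by substituting $L$ into $p$. For a linear operator $A$, $\mathrm D(\log A)=\{f\in\bigcap_{k\ge0}\mathrm D(A^k):\lim_K\sum_{k=1}^K\frac1k(\mathbf1-A)^kf\text{ exists}\}$, $\log Af=-\sum_{k\ge1}\frac1k(\mathbf1-A)^kf$. $\mathrm D(p,c)$ is the linear hull of all $\varphi\in\mathrm D(N)$ for which there is $\alpha\in\mathbb C$ with $|p(\alpha)-1|<1$, $\alpha p'(\alpha)+cp(\alpha)=0$ and $\varphi\in\ker(L-\alpha\mathbf1)$. Commutators $[A,B]=AB-BA$ on $\mathrm D(AB)\cap\mathrm D(BA)$; ''$[A,B]=C$ on $\mathcal D$'' means $\mathcal D\subset \mathrm D(AB)\cap\mathrm D(BA)$ and $(AB-BA)\varphi=C\varphi$ on $\mathcal D$. *)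

(* Defs.v *)
From Stdlib Require Import Reals List ClassicalEpsilon.
From Coquelicot Require Import Coquelicot.
Open Scope C_scope.

(* Vectors: complex sequences indexed by N = {0,1,...}; coordinate n is the
   coefficient on the basis vector xi_n. *)
Definition vec := nat -> C.
Definition vzero : vec := fun _ => 0.
Definition vadd (f g : vec) : vec := fun n => f n + g n.
Definition vsub (f g : vec) : vec := fun n => f n - g n.
Definition vscal (a : C) (f : vec) : vec := fun n => a * f n.

Definition in_l2 (f : vec) : Prop :=
  ex_series (fun n => (Cmod (f n) ^ 2)%R).
Definition dist2 (f g : vec) : R := Series (fun n => (Cmod (f n - g n) ^ 2)%R).
Definition l2_cvg (u : nat -> vec) (v : vec) : Prop :=
  in_l2 v /\ (forall K, in_l2 (u K)) /\ is_lim_seq (fun K => dist2 (u K) v) 0%R.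
Definition lim_l2 (u : nat -> vec) : vec :=
  epsilon (inhabits vzero) (fun v => l2_cvg u v).

Fixpoint vsum1 (F : nat -> vec) (K : nat) : vec :=
  match K with
  | O => vzero
  | S K' => vadd (vsum1 F K') (F K)
  end.

Record op := Op { dom : vec -> Prop ; app : vec -> vec }.

Definition Iop : op := Op in_l2 (fun f => f).
Definition Nop : op :=
  Op (fun f => in_l2 f /\ in_l2 (fun n => RtoC (INR n) * f n))
     (fun f n => RtoC (INR n) * f n).
(* left shift L xi_n = xi_{n-1}, L xi_0 = 0, i.e. (L f)_n = f_{n+1} *)
Definition Lop : op := Op in_l2 (fun f n => f (S n)).

Definition ocomp (A B : op) : op :=
  Op (fun f => dom B f /\ dom A (app B f)) (fun f => app A (app B f)).
Definition osub (A B : op) : op :=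
  Op (fun f => dom A f /\ dom B f) (fun f => vsub (app A f) (app B f)).
Definition oscal (a : C) (A : op) : op := Op (dom A) (fun f => vscal a (app A f)).
Fixpoint opow (A : op) (k : nat) : op :=
  match k with O => Iop | S k' => ocomp A (opow A k') end.

(* Complex polynomials as coefficient lists [a_0; a_1; ...; a_d]. *)
Definition cpoly := list C.
Fixpoint peval (p : cpoly) (x : C) : C :=
  match p with nil => 0 | a :: q => a + x * peval q x end.
(* value of the derivative p' at x *)
Fixpoint pdeval (p : cpoly) (x : C) : C :=
  match p with nil => 0 | a :: q => peval q x + x * pdeval q x end.
(* p(L) : the bounded operator a_0 + a_1 L + ... + a_d L^d (Horner form) *)
Fixpoint pL_app (p : cpoly) (f : vec) : vec :=
  match p with
  | nil => vzero
  | a :: q => let g := pL_app q f in vadd (vscal a f) (fun n => g (S n))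
  end.
Definition pLop (p : cpoly) : op := Op in_l2 (pL_app p).

Definition log_psum (A : op) (f : vec) (K : nat) : vec :=
  vsum1 (fun k => vscal (RtoC (/ INR k)) (app (opow (osub Iop A) k) f)) K.
Definition logop (A : op) : op :=
  Op (fun f => (forall k, dom (opow A k) f) /\ exists v, l2_cvg (log_psum A f) v)
     (fun f => vscal (-1) (lim_l2 (log_psum A f))).

Definition comm_on (A B C : op) (D : vec -> Prop) : Prop :=
  forall f, D f ->
    dom (ocomp A B) f /\ dom (ocomp B A) f /\
    vsub (app (ocomp A B) f) (app (ocomp B A) f) = app C f.

Fixpoint lincomb (l : list (C * vec)) : vec :=
  match l with nil => vzero | (a, g) :: l' => vadd (vscal a g) (lincomb l') end.
Definition span (S : vec -> Prop) : vec -> Prop :=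
  fun f => exists l : list (C * vec), List.Forall (fun x => S (snd x)) l /\ f = lincomb l.

Definition Dpc (p : cpoly) (c : C) : vec -> Prop :=
  span (fun phi => dom Nop phi /\ exists alpha : C,
          (Cmod (peval p alpha - 1) < 1)%R /\
          alpha * pdeval p alpha + c * peval p alpha = 0 /\
          dom Lop phi /\ app Lop phi = vscal alpha phi).

Definition Eset (p : cpoly) : vec -> Prop :=
  fun phi => in_l2 phi /\
    (forall k, dom Nop (app (opow (osub Iop (pLop p)) k) phi)) /\
    exists v, l2_cvg
      (vsum1 (fun k => vscal (RtoC (/ INR k))
                         (app Nop (app (opow (osub Iop (pLop p)) k) phi)))) v.

Definition is_subspace (D : vec -> Prop) : Prop :=
  D vzero /\ (forall f g, D f -> D g -> D (vadd f g)) /\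
  (forall a f, D f -> D (vscal a f)).
Definition finite_dim (D : vec -> Prop) : Prop :=
  exists l : list vec, forall f, D f -> span (fun g => In g l) f.

(* Main.v *)
Require Import Defs.
From Stdlib Require Import Reals List Lra Lia FunctionalExtensionality Classical.
From Coquelicot Require Import Coquelicot.
Open Scope C_scope.

Lemma sq_ineq (a b x y : C) :
  (Cmod (a * x + b * y) ^ 2 <= 2 * (Cmod a ^ 2 * Cmod x ^ 2) + 2 * (Cmod b ^ 2 * Cmod y ^ 2))%R.
Proof.
  pose proof (Cmod_triangle (a*x) (b*y)) as H.
  rewrite !Cmod_mult in H.
  pose proof (Cmod_ge_0 (a*x+b*y)).
  pose proof (Cmod_ge_0 a). pose proof (Cmod_ge_0 b).
  pose proof (Cmod_ge_0 x). pose proof (Cmod_ge_0 y).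
  assert (0 <= Cmod a * Cmod x)%R by (apply Rmult_le_pos; auto).
  assert (0 <= Cmod b * Cmod y)%R by (apply Rmult_le_pos; auto).
  set (u := (Cmod a * Cmod x)%R) in *. set (v := (Cmod b * Cmod y)%R) in *.
  assert (E1: (Cmod a ^ 2 * Cmod x ^ 2 = u^2)%R) by (unfold u; ring).
  assert (E2: (Cmod b ^ 2 * Cmod y ^ 2 = v^2)%R) by (unfold v; ring).
  rewrite E1, E2.
  assert (Cmod (a*x+b*y) ^ 2 <= (u+v)^2)%R by (apply pow_incr; auto).
  assert (0 <= (u-v)^2)%R by apply pow2_ge_0.
  assert ((u+v)^2 <= 2*u^2+2*v^2)%R by (simpl in *; nra).
  lra.
Qed.

Lemma sq_nonneg (x : C) : (0 <= Cmod x ^ 2)%R.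
Proof. pose proof (Cmod_ge_0 x); nra. Qed.

Lemma in_l2_lin (a b : C) (f g : vec) : in_l2 f -> in_l2 g ->
  in_l2 (fun n => a * f n + b * g n).
Proof.
  intros Hf Hg. unfold in_l2 in *.
  apply (@ex_series_le R_AbsRing R_CompleteNormedModule _ (fun n => 2 * (Cmod a ^ 2 * Cmod (f n) ^ 2) + 2 * (Cmod b ^ 2 * Cmod (g n) ^ 2))%R).
  - intros n. change norm with Rabs. rewrite Rabs_pos_eq by apply sq_nonneg. apply sq_ineq.
  - apply (ex_series_plus (V:=R_NormedModule)); apply (ex_series_scal_l (V:=R_NormedModule));
      apply (ex_series_scal_l (V:=R_NormedModule)); auto.
Qed.

Lemma vec_ext (f g : vec) : (forall n, f n = g n) -> f = g.
Proof. intros; apply functional_extensionality; auto. Qed.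

Lemma in_l2_ext f g : (forall n, f n = g n) -> in_l2 f -> in_l2 g.
Proof. intros H; rewrite (vec_ext f g H); auto. Qed.

Lemma in_l2_add f g : in_l2 f -> in_l2 g -> in_l2 (vadd f g).
Proof. intros; apply (in_l2_ext (fun n => 1 * f n + 1 * g n)); [intros; unfold vadd; ring|].
  apply in_l2_lin; auto. Qed.
Lemma in_l2_sub f g : in_l2 f -> in_l2 g -> in_l2 (vsub f g).
Proof. intros; apply (in_l2_ext (fun n => 1 * f n + (-1) * g n)); [intros; unfold vsub; ring|].
  apply in_l2_lin; auto. Qed.
Lemma in_l2_scal a f : in_l2 f -> in_l2 (vscal a f).
Proof. intros; apply (in_l2_ext (fun n => a * f n + 0 * f n)); [intros; unfold vscal; ring|].
  apply in_l2_lin; auto. Qed.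
Lemma in_l2_zero : in_l2 vzero.
Proof. unfold in_l2. apply (ex_series_ext (fun n => scal 0%R ((/2)^n)%R)).
  - intros; unfold vzero. rewrite Cmod_0. change scal with Rmult. simpl; ring.
  - apply (ex_series_scal_l (V:=R_NormedModule)). apply ex_series_geom. rewrite Rabs_pos_eq; lra.
Qed.

Lemma in_l2_shift f : in_l2 f -> in_l2 (fun n => f (S n)).
Proof. unfold in_l2; intros H. apply (ex_series_incr_1 (fun n => (Cmod (f n) ^ 2)%R)) in H. exact H. Qed.

Lemma in_l2_pL p f : in_l2 f -> in_l2 (pL_app p f).
Proof. intros H; induction p as [|a q IH]; simpl.
  - apply in_l2_zero.
  - apply in_l2_add. apply in_l2_scal; auto. apply in_l2_shift; auto. Qed.

Definition Tv (p : cpoly) (f : vec) : vec := vsub f (pL_app p f).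
Fixpoint Ti (p : cpoly) (k : nat) (f : vec) : vec :=
  match k with O => f | S k' => Tv p (Ti p k' f) end.
Fixpoint Pi (p : cpoly) (k : nat) (f : vec) : vec :=
  match k with O => f | S k' => pL_app p (Pi p k' f) end.

Lemma app_opowT p k f : Defs.app (opow (osub Iop (pLop p)) k) f = Ti p k f.
Proof. induction k; simpl; auto. rewrite IHk. reflexivity. Qed.

Lemma in_l2_Ti p k f : in_l2 f -> in_l2 (Ti p k f).
Proof. intros H; induction k; simpl; auto. unfold Tv. apply in_l2_sub; auto. apply in_l2_pL; auto. Qed.
Lemma in_l2_Pi p k f : in_l2 f -> in_l2 (Pi p k f).
Proof. intros H; induction k; simpl; auto. apply in_l2_pL; auto. Qed.

Lemma dom_opowP p k f : in_l2 f -> dom (opow (pLop p) k) f.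
Proof. intros H. assert (E: forall k, Defs.app (opow (pLop p) k) f = Pi p k f).
  { induction k0; simpl; auto. rewrite IHk0; auto. }
  induction k; simpl; auto. split; auto. rewrite E. apply in_l2_Pi; auto. Qed.

Lemma in_l2_vsum1 F K : (forall k, in_l2 (F k)) -> in_l2 (vsum1 F K).
Proof. intros H; induction K; simpl. apply in_l2_zero. apply in_l2_add; auto. Qed.

Lemma Series_nonneg a : (forall n, 0 <= a n)%R -> ex_series a -> (0 <= Series a)%R.
Proof. intros H E.
  assert (Series (fun n => 0 * a n)%R = 0%R) by (rewrite Series_scal_l; ring).
  rewrite <- H0. apply Series_le; auto. intros n; split; [lra|]. rewrite Rmult_0_l; auto. Qed.

Lemma term_le_Series a N : (forall n, 0 <= a n)%R -> ex_series a -> (a N <= Series a)%R.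
Proof. intros H E. rewrite (Series_incr_n a (S N)) by (auto; lia).
  assert (0 <= Series (fun k => a (S N + k)%nat))%R.
  { apply Series_nonneg. auto. apply (ex_series_incr_n a (S N)) in E. exact E. }
  simpl Init.Nat.pred. destruct N. simpl sum_f_R0. lra. simpl sum_f_R0.
  pose proof (cond_pos_sum a N H). lra. Qed.

Definition ccvg (x : nat -> C) (a : C) : Prop := is_lim_seq (fun K => (Cmod (x K - a)) ^ 2)%R 0%R.

Lemma ccvg_lin u v x y a b : ccvg x a -> ccvg y b ->
  ccvg (fun K => u * x K + v * y K) (u * a + v * b).
Proof. unfold ccvg; intros Hx Hy.
  apply (is_lim_seq_le_le (fun _ => 0%R) _ (fun K => 2 * (Cmod u ^ 2 * Cmod (x K - a) ^ 2) + 2 * (Cmod v ^ 2 * Cmod (y K - b) ^ 2))%R).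
  - intros K; split. apply sq_nonneg.
    replace (u * x K + v * y K - (u * a + v * b)) with (u * (x K - a) + v * (y K - b)) by ring.
    apply sq_ineq.
  - apply is_lim_seq_const.
  - replace (Finite 0) with (Finite (2 * (Cmod u ^ 2 * 0) + 2 * (Cmod v ^ 2 * 0))%R) by (f_equal; ring).
    apply is_lim_seq_plus'; apply is_lim_seq_mult'; try apply is_lim_seq_const;
    apply is_lim_seq_mult'; try apply is_lim_seq_const; auto.
Qed.

Lemma ccvg_lin' u v x y a b z : ccvg x a -> ccvg y b -> z = u * a + v * b ->
  ccvg (fun K => u * x K + v * y K) z.
Proof. intros H1 H2 ->; apply ccvg_lin; auto. Qed.

Lemma ccvg_ext x y a : (forall K, x K = y K) -> ccvg x a -> ccvg y a.
Proof. unfold ccvg; intros H. apply is_lim_seq_ext. intros; rewrite H; auto. Qed.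

Lemma ccvg_S x a : ccvg x a -> ccvg (fun K => x (S K)) a.
Proof. unfold ccvg; intros H. apply (is_lim_seq_incr_1 (fun K => (Cmod (x K - a) ^ 2)%R)) in H. exact H. Qed.

Lemma ccvg_const a : ccvg (fun _ => a) a.
Proof. unfold ccvg. apply (is_lim_seq_ext (fun _ => 0%R)). intros; replace (a - a) with (RtoC 0) by ring.
  rewrite Cmod_0; simpl; ring. apply is_lim_seq_const. Qed.

Lemma ccvg_unique x a b : ccvg x a -> ccvg x b -> a = b.
Proof. intros Ha Hb.
  assert (H: ccvg (fun K => 1 * x K + (-1) * x K) (1 * a + (-1) * b)) by (apply ccvg_lin; auto).
  apply (ccvg_ext _ (fun _ => 0)) in H; [| intros; ring].
  unfold ccvg in H.
  assert (E: Cmod (0 - (1 * a + -1 * b)) = 0%R).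
  { apply is_lim_seq_unique in H. rewrite Lim_seq_const in H. injection H; intro H'.
    pose proof (Cmod_ge_0 (0 - (1 * a + -1 * b))). nra. }
  apply Cmod_eq_0 in E. assert (E2 : a = b + (- (0 - (1 * a + -1 * b)))) by ring.
  rewrite E2, E; ring. Qed.

Lemma l2_coord u v : l2_cvg u v -> forall n, ccvg (fun K => u K n) (v n).
Proof. intros [Hv [Hu Hd]] n. unfold ccvg.
  apply (is_lim_seq_le_le (fun _ => 0%R) _ (fun K => dist2 (u K) v)); auto.
  - intros K; split. apply sq_nonneg. unfold dist2.
    apply (term_le_Series (fun n => Cmod (u K n - v n) ^ 2)%R n). intros; apply sq_nonneg.
    apply (in_l2_sub (u K) v); auto.
  - apply is_lim_seq_const. Qed.

Lemma l2_unique u v w : l2_cvg u v -> l2_cvg u w -> v = w.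
Proof. intros H1 H2. apply vec_ext; intros n.
  eapply ccvg_unique; eapply l2_coord; eauto. Qed.

Lemma lim_l2_eq u v : l2_cvg u v -> lim_l2 u = v.
Proof. intros H. unfold lim_l2.
  assert (H': l2_cvg u (ClassicalEpsilon.epsilon (inhabits vzero) (fun v => l2_cvg u v))).
  { apply ClassicalEpsilon.epsilon_spec. eauto. }
  eapply l2_unique; eauto. Qed.

Lemma ex_sub f g : in_l2 f -> in_l2 g -> ex_series (fun n => Cmod (f n - g n) ^ 2)%R.
Proof. intros; apply (in_l2_sub f g); auto. Qed.
Lemma ex_scal2 (c d : R) a : ex_series a -> ex_series (fun n => c * (d * a n))%R.
Proof. intros; apply (ex_series_scal_l (V:=R_NormedModule)); apply (ex_series_scal_l (V:=R_NormedModule)); auto. Qed.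

Lemma l2_lin a b u v u' v' : l2_cvg u v -> l2_cvg u' v' ->
  l2_cvg (fun K n => a * u K n + b * u' K n) (fun n => a * v n + b * v' n).
Proof. intros [Hv [Hu Hd]] [Hv' [Hu' Hd']]. split; [|split].
  - apply in_l2_lin; auto.
  - intros K; apply in_l2_lin; auto.
  - apply (is_lim_seq_le_le (fun _ => 0%R) _ (fun K => 2 * (Cmod a ^ 2 * dist2 (u K) v) + 2 * (Cmod b ^ 2 * dist2 (u' K) v'))%R).
    + intros K. unfold dist2. split.
      * apply Series_nonneg. intros; apply sq_nonneg.
        apply (in_l2_sub (fun n => a * u K n + b * u' K n) (fun n => a * v n + b * v' n)); apply in_l2_lin; auto.
      * rewrite <- !Series_scal_l. rewrite <- Series_plus.
        apply Series_le. intros n; split. apply sq_nonneg.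
        replace (a * u K n + b * u' K n - (a * v n + b * v' n)) with (a * (u K n - v n) + b * (u' K n - v' n)) by ring.
        apply sq_ineq.
        1,2,3: try (apply (ex_series_plus (V:=R_NormedModule))); apply ex_scal2; apply ex_sub; auto.
    + apply is_lim_seq_const.
    + replace (Finite 0) with (Finite (2 * (Cmod a ^ 2 * 0) + 2 * (Cmod b ^ 2 * 0))%R) by (f_equal; ring).
      apply is_lim_seq_plus'; apply is_lim_seq_mult'; try apply is_lim_seq_const;
      apply is_lim_seq_mult'; try apply is_lim_seq_const; auto.
Qed.

Lemma l2_scalar phi s a : in_l2 phi -> ccvg s a -> l2_cvg (fun K => vscal (s K) phi) (vscal a phi).
Proof. intros Hp Hs. split; [|split].
  - apply in_l2_scal; auto.
  - intros; apply in_l2_scal; auto.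
  - unfold dist2, vscal.
    apply (is_lim_seq_ext (fun K => (Cmod (s K - a) ^ 2 * Series (fun n => Cmod (phi n) ^ 2))%R)).
    + intros K. rewrite <- Series_scal_l. apply Series_ext. intros n.
      replace (s K * phi n - a * phi n) with ((s K - a) * phi n) by ring. rewrite Cmod_mult. ring.
    + replace (Finite 0) with (Finite (0 * Series (fun n => Cmod (phi n) ^ 2))%R) by (f_equal; ring).
      apply is_lim_seq_mult'; auto. apply is_lim_seq_const.
Qed.

Definition Nv (f : vec) : vec := fun n => RtoC (INR n) * f n.

Lemma pL_cons a q f n : pL_app (a :: q) f n = a * f n + pL_app q f (S n).
Proof. reflexivity. Qed.

Lemma pL_lin p a b f g n :
  pL_app p (fun m => a * f m + b * g m) n = a * pL_app p f n + b * pL_app p g n.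
Proof. revert n; induction p as [|x q IH]; intros n; simpl.
  - unfold vzero; ring.
  - unfold vadd, vscal. rewrite IH. ring. Qed.

Lemma pL_ext p f g : (forall n, f n = g n) -> pL_app p f = pL_app p g.
Proof. intros H; rewrite (vec_ext f g H); auto. Qed.

Lemma pL_shift p f n : pL_app p (fun m => f (S m)) n = pL_app p f (S n).
Proof. revert n; induction p as [|x q IH]; intros n; simpl; auto.
  unfold vadd, vscal. rewrite IH. auto. Qed.

Lemma pL_zero q n : pL_app q vzero n = 0.
Proof. revert n; induction q; intros n; simpl; unfold vzero, vadd, vscal; auto.
  rewrite IHq. ring. Qed.
Lemma pL_zero' q n : pL_app q (fun _ => 0) n = 0.
Proof. apply pL_zero. Qed.

Lemma pL_comm p q f n : pL_app p (pL_app q f) n = pL_app q (pL_app p f) n.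
Proof. revert n; induction p as [|x p' IH]; intros n.
  - simpl. rewrite pL_zero. reflexivity.
  - rewrite pL_cons. rewrite IH.
    rewrite (pL_ext q (pL_app (x :: p') f) (fun m => x * f m + 1 * (fun k => pL_app p' f (S k)) m)) by (intros; rewrite pL_cons; ring).
    rewrite pL_lin. rewrite pL_shift. ring. Qed.

Fixpoint Dv (p : cpoly) (f : vec) : vec :=
  match p with nil => vzero | a :: q => fun n => pL_app q f (S n) + Dv q f (S n) end.

Lemma Dv_lin p a b f g n :
  Dv p (fun m => a * f m + b * g m) n = a * Dv p f n + b * Dv p g n.
Proof. revert n; induction p as [|x q IH]; intros n; simpl.
  - unfold vzero; ring.
  - rewrite IH, pL_lin. ring. Qed.

Lemma Dv_ext p f g : (forall n, f n = g n) -> Dv p f = Dv p g.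
Proof. intros H; rewrite (vec_ext f g H); auto. Qed.

Lemma Dv_pL p q f n : Dv p (pL_app q f) n = pL_app q (Dv p f) n.
Proof. revert n; induction p as [|x p' IH]; intros n.
  - simpl. rewrite pL_zero. reflexivity.
  - simpl. rewrite IH, pL_comm.
    rewrite (pL_ext q (fun m => pL_app p' f (S m) + Dv p' f (S m))
               (fun m => 1 * (fun k => pL_app p' f (S k)) m + 1 * (fun k => Dv p' f (S k)) m)) by (intros; ring).
    rewrite pL_lin, !pL_shift. ring. Qed.

Lemma pL_N p f n : pL_app p (Nv f) n = RtoC (INR n) * pL_app p f n + Dv p f n.
Proof. revert n; induction p as [|x q IH]; intros n; simpl.
  - unfold vzero; ring.
  - unfold vadd, vscal, Nv. rewrite IH. rewrite S_INR, RtoC_plus. ring. Qed.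

Lemma Tv_lin p a b f g n :
  Tv p (fun m => a * f m + b * g m) n = a * Tv p f n + b * Tv p g n.
Proof. unfold Tv, vsub. rewrite pL_lin. ring. Qed.

Lemma Tv_ext p f g : (forall n, f n = g n) -> Tv p f = Tv p g.
Proof. intros H; rewrite (vec_ext f g H); auto. Qed.

Lemma Ti_lin p k a b f g n :
  Ti p k (fun m => a * f m + b * g m) n = a * Ti p k f n + b * Ti p k g n.
Proof. revert n; induction k; intros n; simpl; auto.
  rewrite (Tv_ext p _ (fun m => a * Ti p k f m + b * Ti p k g m)) by auto.
  apply Tv_lin. Qed.

Lemma Dv_Tv p f n : Dv p (Tv p f) n = Tv p (Dv p f) n.
Proof. unfold Tv, vsub.
  rewrite (Dv_ext p _ (fun m => 1 * f m + (-1) * pL_app p f m)) by (intros; ring).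
  rewrite Dv_lin, Dv_pL. ring. Qed.

Lemma Dv_Ti p k f n : Dv p (Ti p k f) n = Ti p k (Dv p f) n.
Proof. revert n; induction k; intros n; simpl; auto.
  rewrite Dv_Tv. assert (E: Dv p (Ti p k f) = Ti p k (Dv p f)) by (apply vec_ext; auto).
  rewrite E; auto. Qed.

Lemma Tv_N p f n : Tv p (Nv f) n = RtoC (INR n) * Tv p f n - Dv p f n.
Proof. unfold Tv, vsub. rewrite pL_N. unfold Nv. ring. Qed.

Lemma Ti_N p k f n : Ti p (S k) (Nv f) n = RtoC (INR n) * Ti p (S k) f n - RtoC (INR (S k)) * Ti p k (Dv p f) n.
Proof. revert n; induction k; intros n.
  - simpl Ti. rewrite Tv_N. simpl INR. ring.
  - change (Ti p (S (S k)) (Nv f) n) with (Tv p (Ti p (S k) (Nv f)) n).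
    rewrite (Tv_ext p _ (fun m => 1 * Nv (Ti p (S k) f) m + (- RtoC (INR (S k))) * Ti p k (Dv p f) m))
      by (intros; rewrite IHk; unfold Nv; ring).
    rewrite Tv_lin, Tv_N. rewrite Dv_Ti.
    change (Ti p (S (S k)) f n) with (Tv p (Ti p (S k) f) n).
    change (Ti p (S k) (Dv p f) n) with (Tv p (Ti p k (Dv p f)) n).
    rewrite (S_INR (S k)), RtoC_plus. ring. Qed.

Lemma log_psum_eq p f : log_psum (pLop p) f = fun K => vsum1 (fun k => vscal (RtoC (/ INR k)) (Ti p k f)) K.
Proof. apply functional_extensionality; intros K. unfold log_psum. f_equal.
  apply functional_extensionality; intros k. rewrite app_opowT. reflexivity. Qed.

Lemma vsum1_S F K n : vsum1 F (S K) n = vsum1 F K n + F (S K) n.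
Proof. reflexivity. Qed.
Lemma vsum1_0 F n : vsum1 F 0 n = 0.
Proof. reflexivity. Qed.

Lemma inv_INR_S k : RtoC (/ INR (S k)) * RtoC (INR (S k)) = 1.
Proof. rewrite <- RtoC_mult. rewrite Rinv_l. reflexivity. apply not_0_INR. lia. Qed.

Lemma pL_ccvg p X x : (forall m, ccvg (fun K => X K m) (x m)) ->
  forall n, ccvg (fun K => pL_app p (X K) n) (pL_app p x n).
Proof. intros H; induction p as [|a q IH]; intros n.
  - simpl. unfold vzero. apply ccvg_const.
  - apply (ccvg_ext (fun K => a * X K n + 1 * pL_app q (X K) (S n))).
    intros; rewrite pL_cons; ring.
    rewrite pL_cons. replace (a * x n + pL_app q x (S n)) with (a * x n + 1 * pL_app q x (S n)) by ring.
    apply ccvg_lin; auto. Qed.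

Fixpoint qpoly (p : cpoly) (c : C) : cpoly :=
  match p with nil => nil | a :: q => (c * a) :: qpoly q (c + 1) end.

Lemma qpoly_eq p c f n : pL_app (qpoly p c) f n = Dv p f n + c * pL_app p f n.
Proof. revert c n; induction p as [|a q IH]; intros c n.
  - simpl. unfold vzero. ring.
  - simpl qpoly. rewrite pL_cons, IH. simpl Dv. rewrite pL_cons. ring. Qed.

Lemma key2 p c phi v s t :
  l2_cvg (fun K => vsum1 (fun k => vscal (RtoC (/ INR k)) (Nv (Ti p k phi))) K) v ->
  l2_cvg (log_psum (pLop p) phi) s ->
  l2_cvg (log_psum (pLop p) (Nv phi)) t ->
  vsub (Nv (vscal (-1) s)) (vscal (-1) t) = vscal c phi ->
  forall n, pL_app (qpoly p c) phi n = 0.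
Proof.
  intros HU HS HT Hc.
  rewrite log_psum_eq in HS, HT.
  set (U := fun K => vsum1 (fun k => vscal (RtoC (/ INR k)) (Nv (Ti p k phi))) K) in *.
  set (Sq := fun K => vsum1 (fun k => vscal (RtoC (/ INR k)) (Ti p k phi)) K) in *.
  set (L := fun K => vsum1 (fun k => vscal (RtoC (/ INR k)) (Ti p k (Nv phi))) K) in *.
  set (g := Dv p phi).
  set (W := fun K => vsum1 (fun k => Ti p (pred k) g) K).
  assert (EU : forall K n, U K n = RtoC (INR n) * Sq K n).
  { intros K n; unfold U, Sq; induction K. rewrite !vsum1_0; ring.
    rewrite !vsum1_S, IHK. unfold vscal, Nv. ring. }
  assert (EL : forall K n, L K n = U K n - W K n).
  { intros K n; unfold L, U, W; induction K. rewrite !vsum1_0; ring.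
    rewrite !vsum1_S, IHK. unfold vscal. rewrite Ti_N. unfold Nv. simpl pred.
    pose proof (inv_INR_S K). fold g.
    replace (RtoC (/ INR (S K)) * (RtoC (INR n) * Ti p (S K) phi n - RtoC (INR (S K)) * Ti p K g n))
      with (RtoC (/ INR (S K)) * (RtoC (INR n) * Ti p (S K) phi n) - (RtoC (/ INR (S K)) * RtoC (INR (S K))) * Ti p K g n) by ring.
    rewrite H. ring. }
  assert (EP : forall K n, pL_app p (W K) n = g n - Ti p K g n).
  { intros K; induction K; intros n.
    - unfold W. simpl vsum1. rewrite pL_zero. simpl. ring.
    - unfold W. simpl vsum1. fold (W K).
      rewrite (pL_ext p (vadd (W K) (Ti p K g)) (fun m => 1 * W K m + 1 * Ti p K g m)) by (intros; unfold vadd; ring).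
      rewrite pL_lin, IHK. change (Ti p (S K) g n) with (Tv p (Ti p K g) n). unfold Tv, vsub. ring. }
  assert (Hv : forall n, v n = RtoC (INR n) * s n).
  { intros n. apply (ccvg_unique (fun K => U K n)). apply l2_coord; auto.
    apply (ccvg_ext (fun K => RtoC (INR n) * Sq K n + 0 * Sq K n)). intros; rewrite EU; ring.
    replace (RtoC (INR n) * s n) with (RtoC (INR n) * s n + 0 * s n) by ring.
    apply ccvg_lin; apply l2_coord; auto. }
  assert (Hct : forall n, - (RtoC (INR n) * s n) + t n = c * phi n).
  { intros n. assert (H := f_equal (fun f => f n) Hc). simpl in H. unfold vsub, Nv, vscal in H.
    rewrite <- H. ring. }
  assert (HW : forall n, ccvg (fun K => W K n) ((-c) * phi n)).
  { intros n. apply (ccvg_ext (fun K => 1 * U K n + (-1) * L K n)). intros; rewrite EL; ring.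
    replace ((-c) * phi n) with (1 * v n + (-1) * t n).
    apply ccvg_lin; apply l2_coord; auto.
    rewrite Hv. replace ((-c) * phi n) with (- (c * phi n)) by ring. rewrite <- Hct. ring. }
  assert (HTi : forall n, ccvg (fun K => Ti p K g n) 0).
  { intros n. apply (ccvg_ext (fun K => 1 * W (S K) n + (-1) * W K n)).
    intros K; unfold W; rewrite vsum1_S; simpl pred; ring.
    replace (0:C) with (1 * ((-c) * phi n) + (-1) * ((-c) * phi n)) by ring.
    apply ccvg_lin. apply (ccvg_S (fun K => W K n)). auto. auto. }
  assert (HPg : forall n, pL_app p (fun m => (-c) * phi m) n = g n).
  { intros n. apply (ccvg_unique (fun K => pL_app p (W K) n)).
    apply pL_ccvg; auto.
    apply (ccvg_ext (fun K => 1 * g n + (-1) * Ti p K g n)). intros; rewrite EP; ring.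
    apply (ccvg_lin' _ _ _ _ (g n) 0). apply ccvg_const. auto. ring. }
  intros n. rewrite qpoly_eq. fold g. rewrite <- HPg.
  rewrite (pL_ext p _ (fun m => (-c) * phi m + 0 * phi m)) by (intros; ring).
  rewrite pL_lin. ring.
Qed.

Lemma mult_zero_cases (x y : C) : x * y = 0 -> x = 0 \/ y = 0.
Proof. intros H. destruct (classic (x = 0)); auto. destruct (classic (y = 0)); auto.
  exfalso; apply (Cmult_neq_0 x y); auto. Qed.

Lemma zero_poly p c : (forall j : nat, c + RtoC (INR j) <> 0) ->
  List.Forall (fun x : C => x = 0) (qpoly p c) -> forall x, peval p x = 0.
Proof. revert c; induction p as [|a q IH]; intros c Hc HF x; simpl; auto.
  simpl in HF. inversion HF; subst.
  apply mult_zero_cases in H1. destruct H1 as [H1|H1].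
  { exfalso; apply (Hc 0%nat). rewrite H1. simpl INR. ring. }
  subst a. rewrite (IH (c + 1)); auto. ring.
  intros j. replace (c + 1 + RtoC (INR j)) with (c + RtoC (INR (S j))). apply Hc.
  rewrite S_INR, RtoC_plus. ring.
Qed.

Lemma mono_poly p c : List.Forall (fun x : C => x = 0) (qpoly p c) ->
  exists (b : C) (m : nat), forall x : C, peval p x = b * Cpow x m.
Proof. revert c; induction p as [|a q IH]; intros c HF.
  - exists 0, 0%nat. intros; simpl; ring.
  - simpl in HF. inversion HF; subst.
    destruct (IH _ H2) as [b [m Hm]].
    apply mult_zero_cases in H1. destruct H1 as [H1|H1].
    + subst c. exists a, 0%nat. intros x. simpl.
      rewrite (zero_poly q (0 + 1)); auto. ring.
      intros j. rewrite <- RtoC_plus. replace (0 + 1)%C with (RtoC 1) by ring. rewrite <- RtoC_plus.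
      intros E. apply RtoC_inj in E. pose proof (pos_INR j). lra.
    + subst a. exists b, (S m). intros x; simpl. rewrite Hm. ring.
Qed.

Lemma exists_decomp (q : list C) : List.Exists (fun x : C => x <> 0) q ->
  exists r b zs, q = r ++ b :: zs /\ b <> 0 /\ List.Forall (fun x : C => x = 0) zs.
Proof. induction q as [|a q IH]; intros H.
  - inversion H.
  - destruct (classic (List.Exists (fun x : C => x <> 0) q)) as [E|E].
    + destruct (IH E) as [r [b [zs [H1 [H2 H3]]]]]. exists (a :: r), b, zs. subst q. auto.
    + apply Exists_cons in H. destruct H as [H|H]; [|contradiction].
      exists nil, a, q. split; auto. split; auto.
      apply Forall_Exists_neg in E. eapply Forall_impl; [|exact E]. intros x Hx. apply NNPP; auto.
Qed.

Lemma pL_app_cat r s f n : pL_app (r ++ s) f n = pL_app r f n + pL_app s f (n + length r)%nat.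
Proof. revert n; induction r as [|x r IH]; intros n; simpl.
  - unfold vzero. rewrite Nat.add_0_r. ring.
  - unfold vadd, vscal. rewrite IH. replace (S n + length r)%nat with (n + S (length r))%nat by lia. ring. Qed.

Lemma pL_zeros zs f n : List.Forall (fun x : C => x = 0) zs -> pL_app zs f n = 0.
Proof. intros H; revert n; induction H; intros n; simpl; unfold vzero, vadd, vscal; auto.
  rewrite IHForall, H. ring. Qed.

Lemma pL_small (r : list C) (f : vec) (n : nat) : (forall j, (j < length r)%nat -> f (n + j)%nat = 0) -> pL_app r f n = 0.
Proof. revert n; induction r as [|x r IH]; intros n H; simpl; unfold vzero, vadd, vscal; auto.
  rewrite IH. rewrite <- (Nat.add_0_r n). rewrite H. ring. simpl; lia.
  intros j Hj. replace (S n + j)%nat with (n + S j)%nat by lia. apply H. simpl; lia. Qed.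

Lemma recur_zero (r : list C) (b : C) (zs : list C) (f : vec) : b <> 0 -> List.Forall (fun x : C => x = 0) zs ->
  (forall n, pL_app (r ++ b :: zs) f n = 0) -> (forall i, (i < length r)%nat -> f i = 0) -> f = vzero.
Proof. intros Hb Hz Hq Hi. apply vec_ext. intros m. unfold vzero.
  induction m as [m IHm] using (well_founded_induction Wf_nat.lt_wf).
  destruct (Nat.lt_ge_cases m (length r)) as [Hm|Hm]; auto.
  pose proof (Hq (m - length r)%nat) as E. rewrite pL_app_cat in E. simpl in E. unfold vadd, vscal in E.
  rewrite pL_small in E. rewrite pL_zeros in E by auto.
  replace (m - length r + length r)%nat with m in E by lia.
  assert (b * f m = 0) by (rewrite <- E; ring).
  apply mult_zero_cases in H. destruct H; [contradiction|auto].
  intros j Hj. apply IHm. lia. Qed.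

Lemma fd_induct n : forall (D : vec -> Prop),
  (forall f g, D f -> D g -> D (vadd f g)) -> (forall a f, D f -> D (vscal a f)) ->
  (forall f, D f -> (forall i, (i < n)%nat -> f i = 0) -> f = vzero) -> finite_dim D.
Proof. induction n as [|n IH]; intros D Hadd Hsc Hz.
  - exists nil. intros f Hf. exists nil. split. constructor. simpl. apply Hz; auto. intros; lia.
  - destruct (IH (fun f => D f /\ f n = 0)) as [l' Hl'].
    + intros f g [Hf Hf0] [Hg Hg0]. split; auto. unfold vadd; rewrite Hf0, Hg0; ring.
    + intros a f [Hf Hf0]. split; auto. unfold vscal; rewrite Hf0; ring.
    + intros f [Hf Hf0] Hi. apply Hz; auto. intros i Hin. destruct (Nat.eq_dec i n); [subst; auto|].
      apply Hi; lia.
    + destruct (classic (exists h, D h /\ h n <> 0)) as [[h [Hh Hhn]]|Hno].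
      * exists (h :: l'). intros f Hf.
        set (a := f n / h n).
        destruct (Hl' (vadd f (vscal (- a) h))) as [ls [Hls Eq]].
        { split. apply Hadd; auto. unfold vadd, vscal, a. field; auto. }
        exists ((a, h) :: ls). split.
        { constructor. simpl; auto. eapply Forall_impl; [|exact Hls]. intros x Hx; simpl; auto. }
        simpl. rewrite <- Eq. apply vec_ext; intros m. unfold vadd, vscal. ring.
      * exists l'. intros f Hf. apply Hl'. split; auto.
        apply NNPP. intros Hfn. apply Hno. exists f; auto.
Qed.

Lemma part2 (p : cpoly) (c : C) :
  (~ exists (b : C) (m : nat), forall x : C, peval p x = b * Cpow x m) ->
     forall D : vec -> Prop,
       is_subspace D ->
       (forall phi, D phi ->
          Eset p phi /\ dom (ocomp Nop (logop (pLop p))) phi /\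
          dom (ocomp (logop (pLop p)) Nop) phi) ->
       comm_on Nop (logop (pLop p)) (oscal c Iop) D ->
       finite_dim D.
Proof.
  intros Hnm D [HD0 [HDadd HDsc]] Hdom Hcomm.
  assert (Hq : forall phi, D phi -> forall n, pL_app (qpoly p c) phi n = 0).
  { intros phi Hphi.
    destruct (Hdom phi Hphi) as [[Hl2 [_ [v Hv]]] [[[_ [s Hs]] _] [_ [_ [t Ht]]]]].
    destruct (Hcomm phi Hphi) as [_ [_ Heq]].
    change (vsub (Nv (vscal (-1) (lim_l2 (log_psum (pLop p) phi))))
                 (vscal (-1) (lim_l2 (log_psum (pLop p) (Nv phi)))) = vscal c phi) in Heq.
    change (l2_cvg (log_psum (pLop p) (Nv phi)) t) in Ht.
    rewrite (lim_l2_eq _ _ Hs), (lim_l2_eq _ _ Ht) in Heq.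
    apply (key2 p c phi v s t); auto.
    assert (E: (fun K => vsum1 (fun k => vscal (RtoC (/ INR k)) (Nv (Ti p k phi))) K) =
      vsum1 (fun k => vscal (RtoC (/ INR k)) (Defs.app Nop (Defs.app (opow (osub Iop (pLop p)) k) phi)))).
    { apply functional_extensionality; intros K; f_equal; apply functional_extensionality; intros k.
      rewrite app_opowT; reflexivity. }
    rewrite E; exact Hv. }
  destruct (classic (List.Exists (fun x : C => x <> 0) (qpoly p c))) as [HE|HE].
  { destruct (exists_decomp _ HE) as [r [b [zs [Hqe [Hb Hzs]]]]].
    apply (fd_induct (length r) D); auto.
    intros f Hf Hi. apply (recur_zero r b zs f); auto. rewrite <- Hqe. apply Hq; auto. }
  exfalso. apply Hnm. apply (mono_poly p c).
  apply Forall_Exists_neg in HE. eapply Forall_impl; [|exact HE]. intros x Hx. apply NNPP; auto.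
Qed.

Definition Good (p : cpoly) (c : C) (f : vec) : Prop :=
  in_l2 f /\ in_l2 (Nv f) /\ exists a b, l2_cvg (log_psum (pLop p) f) a /\
    l2_cvg (log_psum (pLop p) (Nv f)) b /\ in_l2 (Nv a) /\
    (forall n, b n - RtoC (INR n) * a n = c * f n).

Lemma lp_lin p x y f g K n :
  log_psum (pLop p) (fun m => x * f m + y * g m) K n =
  x * log_psum (pLop p) f K n + y * log_psum (pLop p) g K n.
Proof. rewrite !log_psum_eq. cbv beta. induction K. rewrite !vsum1_0; ring.
  rewrite !vsum1_S, IHK. unfold vscal. rewrite Ti_lin. ring. Qed.

Lemma Nv_lin x y f g : Nv (fun m => x * f m + y * g m) = fun m => x * Nv f m + y * Nv g m.
Proof. apply vec_ext; intros; unfold Nv; ring. Qed.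

Lemma Good_lin p c x y f g : Good p c f -> Good p c g -> Good p c (fun m => x * f m + y * g m).
Proof. intros [Hf [HNf [a [b [Ha [Hb [HNa Heq]]]]]]] [Hg [HNg [a' [b' [Ha' [Hb' [HNa' Heq']]]]]]].
  split; [apply in_l2_lin; auto|]. split; [rewrite Nv_lin; apply in_l2_lin; auto|].
  exists (fun n => x * a n + y * a' n), (fun n => x * b n + y * b' n).
  split; [|split; [|split]].
  - rewrite (functional_extensionality _ (fun K n => x * log_psum (pLop p) f K n + y * log_psum (pLop p) g K n)).
    apply l2_lin; auto. intros K; apply vec_ext; intros n; apply lp_lin.
  - rewrite Nv_lin.
    rewrite (functional_extensionality _ (fun K n => x * log_psum (pLop p) (Nv f) K n + y * log_psum (pLop p) (Nv g) K n)).
    apply l2_lin; auto. intros K; apply vec_ext; intros n; apply lp_lin.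
  - rewrite Nv_lin; apply in_l2_lin; auto.
  - intros n. transitivity (x * (b n - RtoC (INR n) * a n) + y * (b' n - RtoC (INR n) * a' n)). ring.
    rewrite Heq, Heq'. ring.
Qed.

Lemma Good_zero p c : Good p c vzero.
Proof.
  assert (E0 : forall f : vec, vscal 0 f = vzero) by (intros; apply vec_ext; intros; unfold vscal, vzero; ring).
  assert (HL : forall K, log_psum (pLop p) vzero K = vzero).
  { assert (Ez: (fun m => 0 * vzero m + 0 * vzero m) = vzero) by (apply vec_ext; intros; unfold vzero; ring).
    intros K; apply vec_ext; intros n. rewrite <- Ez at 1. rewrite lp_lin. unfold vzero at 3. ring. }
  assert (HN : Nv vzero = vzero) by (apply vec_ext; intros; unfold Nv, vzero; ring).
  split; [apply in_l2_zero|]. rewrite HN. split; [apply in_l2_zero|].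
  exists vzero, vzero.
  assert (Hc : l2_cvg (log_psum (pLop p) vzero) vzero).
  { rewrite (functional_extensionality _ (fun K => vzero) HL).
    pose proof (l2_scalar vzero (fun _ => 0) 0 in_l2_zero (ccvg_const 0)) as H.
    rewrite E0 in H. match type of H with l2_cvg ?u _ => replace (fun _ : nat => vzero) with u; [exact H|] end. apply functional_extensionality; intros; cbv beta; apply E0. }
  split; auto. split; auto. split. rewrite HN; apply in_l2_zero.
  intros; unfold vzero; ring.
Qed.

Lemma lincomb_cons a g l : lincomb ((a, g) :: l) = fun m => a * g m + 1 * lincomb l m.
Proof. apply vec_ext; intros; simpl; unfold vadd, vscal; ring. Qed.

Lemma Good_lincomb p c l : List.Forall (fun x => Good p c (snd x)) l -> Good p c (lincomb l).
Proof. induction l as [|[a g] l IH]; intros H.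
  - simpl. apply Good_zero.
  - inversion H; subst. rewrite lincomb_cons. apply Good_lin; auto. Qed.

Fixpoint csum (F : nat -> C) (K : nat) : C :=
  match K with O => 0 | S K' => csum F K' + F K end.

Lemma csum_sum_n F K : csum F (S K) = sum_n (fun k => F (S k)) K.
Proof. induction K. simpl. rewrite sum_O. ring.
  rewrite sum_Sn. change (csum F (S (S K))) with (csum F (S K) + F (S (S K))). rewrite IHK. reflexivity. Qed.

Lemma series_lim (G : nat -> C) (B : nat -> R) : (forall k, Cmod (G k) <= B k)%R -> ex_series B ->
  exists L, ccvg (fun K => sum_n G K) L.
Proof. intros HB EB.
  assert (E: ex_series G).
  { apply (@ex_series_le C_AbsRing C_CompleteNormedModule G B). intros k. apply (HB k). auto. }
  destruct E as [L HL]. exists L. unfold is_series in HL.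
  pose proof (proj1 (@filterlim_locally_ball_norm C_AbsRing nat C_NormedModule eventually _ (sum_n G) L) HL) as HL2. clear HL. rename HL2 into HL.
  unfold ccvg. apply is_lim_seq_spec. intros eps.
  assert (Hd : (0 < Rmin eps 1)%R) by (apply Rmin_pos; [apply cond_pos|lra]).
  destruct (HL (mkposreal _ Hd)) as [N HN]. exists N. intros n Hn.
  specialize (HN n Hn). unfold ball_norm in HN. simpl in HN.
  change (norm (minus (sum_n G n) L)) with (Cmod (sum_n G n - L)) in HN.
  pose proof (Cmod_ge_0 (sum_n G n - L)).
  pose proof (Rmin_r eps 1). pose proof (Rmin_l eps 1).
  rewrite Rminus_0_r. rewrite Rabs_pos_eq by (apply sq_nonneg).
  set (x := Cmod (sum_n G n - L)) in *.
  assert (x * x <= x * 1)%R by (apply Rmult_le_compat_l; lra).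
  simpl. lra.
Qed.

Lemma ccvg_unshift x a : ccvg (fun K => x (S K)) a -> ccvg x a.
Proof. unfold ccvg; intros H. apply (is_lim_seq_incr_1 (fun K => (Cmod (x K - a) ^ 2)%R)). exact H. Qed.

Lemma inv_INR_S_le k : (Rabs (/ INR (S k)) <= 1)%R.
Proof. assert (H1 : (1 <= INR (S k))%R) by (rewrite S_INR; pose proof (pos_INR k); lra).
  rewrite Rabs_pos_eq by (left; apply Rinv_0_lt_compat; lra).
  rewrite <- Rinv_1. apply Rinv_le_contravar; lra. Qed.

Lemma log_scalar z : (Cmod z < 1)%R ->
  exists L, ccvg (csum (fun k => RtoC (/ INR k) * Cpow z k)) L.
Proof. intros Hz.
  destruct (series_lim (fun k => RtoC (/ INR (S k)) * Cpow z (S k)) (fun k => Cmod z * Cmod z ^ k)%R) as [L HL].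
  - intros k. rewrite Cmod_mult, Cmod_R, Cmod_pow. simpl pow.
    pose proof (inv_INR_S_le k). pose proof (Cmod_ge_0 z).
    assert (0 <= Cmod z * Cmod z ^ k)%R by (apply Rmult_le_pos; auto; apply pow_le; auto).
    pose proof (Rabs_pos (/ INR (S k))). nra.
  - apply (ex_series_ext (fun k => scal (Cmod z) (Cmod z ^ k)%R)). intros; reflexivity.
    apply (ex_series_scal_l (V:=R_NormedModule)). apply ex_series_geom. rewrite Rabs_pos_eq; auto. apply Cmod_ge_0.
  - exists L. apply ccvg_unshift. apply (ccvg_ext (fun K => sum_n (fun k => RtoC (/ INR (S k)) * Cpow z (S k)) K)); auto.
    intros K. rewrite csum_sum_n. reflexivity.
Qed.

Lemma pow_to0 z : (Cmod z < 1)%R -> ccvg (fun K => Cpow z K) 0.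
Proof. intros Hz. unfold ccvg.
  apply (is_lim_seq_ext (fun K => (Cmod z ^ K) * ((Cmod z ^ K) * 1))%R).
  intros K. replace (Cpow z K - 0) with (Cpow z K) by ring. rewrite Cmod_pow. simpl. ring.
  replace (Finite 0) with (Finite (0 * (0 * 1))%R) by (f_equal; ring).
  assert (G : is_lim_seq (fun K => Cmod z ^ K)%R 0%R) by (apply is_lim_seq_geom; rewrite Rabs_pos_eq; auto; apply Cmod_ge_0).
  apply is_lim_seq_mult'; auto. apply is_lim_seq_mult'; auto. apply is_lim_seq_const. Qed.

Lemma geom_lim z : (Cmod z < 1)%R -> ccvg (csum (fun k => Cpow z (pred k))) (/ (1 - z)).
Proof. intros Hz.
  assert (Hz1 : 1 - z <> 0).
  { intros E. assert (z = 1) by (transitivity (1 - (1 - z)); [ring | rewrite E; ring]).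
    subst z. rewrite Cmod_1 in Hz. lra. }
  assert (Ht : forall K, csum (fun k => Cpow z (pred k)) K * (1 - z) = 1 - Cpow z K).
  { induction K. simpl. ring. simpl csum. simpl pred. rewrite Cmult_plus_distr_r, IHK. simpl. ring. }
  apply (ccvg_ext (fun K => (- / (1 - z)) * Cpow z K + 1 * (fun _ => / (1 - z)) K)).
  - intros K. assert (E := Ht K). 
    transitivity ((1 - Cpow z K) / (1 - z)). field; auto. rewrite <- E. field; auto.
  - apply (ccvg_lin' _ _ _ _ 0 (/ (1 - z))). apply pow_to0; auto. apply ccvg_const. ring.
Qed.

Lemma csum_S F K : csum F (S K) = csum F K + F (S K).
Proof. reflexivity. Qed.

Lemma Good_eigen p c phi alpha : in_l2 phi -> in_l2 (Nv phi) ->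
  (Cmod (peval p alpha - 1) < 1)%R -> alpha * pdeval p alpha + c * peval p alpha = 0 ->
  (forall n, phi (S n) = alpha * phi n) -> Good p c phi.
Proof.
  intros Hl HNl Hm Heq Hs.
  assert (HP : forall q n, pL_app q phi n = peval q alpha * phi n).
  { intros q; induction q as [|a q IH]; intros n. simpl; unfold vzero; ring.
    rewrite pL_cons, IH, Hs. simpl. ring. }
  assert (HD : forall q n, Dv q phi n = alpha * pdeval q alpha * phi n).
  { intros q; induction q as [|a q IH]; intros n. simpl; unfold vzero; ring.
    simpl Dv. rewrite IH, HP, Hs. simpl. ring. }
  set (P := peval p alpha) in *.
  set (z := 1 - P).
  assert (Hz : (Cmod z < 1)%R).
  { unfold z. replace (1 - P) with (- (P - 1)) by ring. rewrite Cmod_opp. auto. }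
  assert (HP0 : P <> 0).
  { intros E. rewrite E in Hm. replace (0 - 1) with (- (1)) in Hm by ring. rewrite Cmod_opp, Cmod_1 in Hm. lra. }
  assert (HTi : forall k n, Ti p k phi n = Cpow z k * phi n).
  { intros k; induction k; intros n. simpl; ring.
    change (Ti p (S k) phi n) with (Ti p k phi n - pL_app p (Ti p k phi) n).
    rewrite (pL_ext p _ (fun m => Cpow z k * phi m + 0 * phi m)) by (intros; rewrite IHk; ring).
    rewrite pL_lin, HP, IHk. fold P. unfold z. simpl Cpow. ring. }
  set (beta := alpha * pdeval p alpha).
  assert (HTD : forall k n, Ti p k (Dv p phi) n = Cpow z k * (beta * phi n)).
  { intros k n. rewrite (Dv_ext p phi (fun m => 1 * phi m + 0 * phi m)) by (intros; ring).
    assert (E: Dv p (fun m => 1 * phi m + 0 * phi m) = fun m => beta * phi m + 0 * phi m).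
    { apply vec_ext; intros m. rewrite Dv_lin, HD. unfold beta. ring. }
    rewrite E, Ti_lin, HTi. ring. }
  set (sK := csum (fun k => RtoC (/ INR k) * Cpow z k)).
  set (tK := csum (fun k => Cpow z (pred k))).
  assert (HL1 : forall K, log_psum (pLop p) phi K = vscal (sK K) phi).
  { intros K. rewrite log_psum_eq. apply vec_ext; intros n. cbv beta. induction K.
    rewrite vsum1_0. unfold vscal, sK; simpl; ring.
    rewrite vsum1_S, IHK. unfold vscal, sK. rewrite csum_S. rewrite HTi. ring. }
  assert (HL2 : forall K, log_psum (pLop p) (Nv phi) K =
     fun n => 1 * vscal (sK K) (Nv phi) n + (- beta) * vscal (tK K) phi n).
  { intros K. rewrite log_psum_eq. apply vec_ext; intros n. cbv beta. induction K.
    rewrite vsum1_0. unfold vscal, sK, tK; simpl; ring.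
    rewrite vsum1_S, IHK. unfold vscal, sK, tK. rewrite csum_S. unfold vscal.
    rewrite Ti_N, HTi, HTD. simpl pred. unfold Nv.
    pose proof (inv_INR_S K) as Hi.
    transitivity (1 * ((csum (fun k => RtoC (/ INR k) * Cpow z k) K + RtoC (/ INR (S K)) * Cpow z (S K)) * (RtoC (INR n) * phi n)) +
      - beta * ((csum (fun k => Cpow z (pred k)) K + (RtoC (/ INR (S K)) * RtoC (INR (S K))) * Cpow z K) * phi n)).
    rewrite !Cpow_S. ring. rewrite Hi, csum_S. simpl pred. ring. }
  destruct (log_scalar z Hz) as [sL HsL].
  assert (HtL : ccvg tK (/ (1 - z))) by (apply geom_lim; auto).
  split; auto. split; auto.
  exists (vscal sL phi), (fun n => 1 * vscal sL (Nv phi) n + (- beta) * vscal (/ (1 - z)) phi n).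
  split; [|split; [|split]].
  - rewrite (functional_extensionality _ _ HL1). apply l2_scalar; auto.
  - rewrite (functional_extensionality _ _ HL2). apply l2_lin; apply l2_scalar; auto.
  - apply (in_l2_ext (vscal sL (Nv phi))). intros; unfold vscal, Nv; ring. apply in_l2_scal; auto.
  - intros n. unfold vscal, Nv. unfold z.
    assert (Hb : beta = - c * P).
    { unfold beta. transitivity ((alpha * pdeval p alpha + c * P) - c * P). ring. rewrite Heq. ring. }
    rewrite Hb. replace (1 - (1 - P)) with P by ring. field. auto.
Qed.

Lemma ex_series_n2 (rho : R) : (0 < rho < 1)%R ->
  ex_series (fun n => (INR (S n) ^ 2 * rho ^ n)%R).
Proof. intros Hr.
  set (a := fun n => (INR (S n) ^ 2 * rho ^ n)%R).
  assert (Ha : forall n, (0 < a n)%R).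
  { intros n; unfold a. apply Rmult_lt_0_compat. apply pow_lt. apply lt_0_INR; lia. apply pow_lt; lra. }
  assert (E : ex_series (fun n => Rabs (a n))).
  { apply (ex_series_DAlembert a rho). lra. intros n; pose proof (Ha n); lra.
    assert (Hw : is_lim_seq (fun n => / INR (S n))%R 0%R).
    { assert (H := is_lim_seq_inv _ _ is_lim_seq_INR). simpl in H.
      apply (is_lim_seq_incr_1 (fun n => / INR n)%R). apply H. discriminate. }
    apply (is_lim_seq_ext (fun n => ((1 + / INR (S n)) * ((1 + / INR (S n)) * 1) * rho)%R)).
    - intros n. pose proof (Ha n). pose proof (Ha (S n)).
      rewrite Rabs_pos_eq. unfold a. rewrite (S_INR (S n)).
      assert (INR (S n) <> 0)%R by (apply not_0_INR; lia). change (rho ^ S n)%R with (rho * rho ^ n)%R. assert (rho ^ n <> 0)%R by (apply pow_nonzero; lra). field. split; auto.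
      unfold Rdiv. apply Rmult_le_pos; [lra|]. left; apply Rinv_0_lt_compat; lra.
    - replace (Finite rho) with (Finite ((1 + 0) * ((1 + 0) * 1) * rho)%R) by (f_equal; ring).
      apply is_lim_seq_mult'; [|apply is_lim_seq_const].
      apply is_lim_seq_mult'. apply is_lim_seq_plus'; auto; apply is_lim_seq_const.
      apply is_lim_seq_mult'; [|apply is_lim_seq_const]. apply is_lim_seq_plus'; auto; apply is_lim_seq_const. }
  apply (ex_series_ext (fun n => Rabs (a n))); auto. intros n; apply Rabs_pos_eq. left; auto.
Qed.

Lemma eig_l2 (alpha : C) : (Cmod alpha < 1)%R ->
  in_l2 (fun n => Cpow alpha n) /\ in_l2 (Nv (fun n => Cpow alpha n)).
Proof. intros Ha. set (r := (Cmod alpha ^ 2)%R).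
  assert (Hr : (0 <= r < 1)%R).
  { unfold r. pose proof (Cmod_ge_0 alpha). split. nra. simpl. nra. }
  assert (Hp : forall n, (Cmod (Cpow alpha n) ^ 2 = r ^ n)%R).
  { intros n. rewrite Cmod_pow. unfold r. rewrite <- !pow_mult. f_equal. lia. }
  split.
  - unfold in_l2. apply (ex_series_ext (fun n => r ^ n)%R). intros; rewrite Hp; auto.
    apply ex_series_geom. rewrite Rabs_pos_eq; lra.
  - unfold in_l2, Nv. set (rho := ((1 + r) / 2)%R).
    apply (@ex_series_le R_AbsRing R_CompleteNormedModule _ (fun n => (INR (S n) ^ 2 * rho ^ n)%R)).
    + intros n. change norm with Rabs. rewrite Rabs_pos_eq by apply sq_nonneg.
      rewrite Cmod_mult, Cmod_R, Rabs_pos_eq by apply pos_INR.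
      rewrite Rpow_mult_distr, Hp. apply Rmult_le_compat.
      apply pow_le, pos_INR. apply pow_le; lra.
      apply pow_incr. split. apply pos_INR. rewrite S_INR; lra.
      apply pow_incr. unfold rho; lra.
    + apply ex_series_n2. unfold rho; lra.
Qed.

Theorem mainTheorem8 (p : cpoly) (c : C) (hc : c <> 0) :
  ((exists alpha : C, (Cmod alpha < 1)%R /\
       alpha * pdeval p alpha + c * peval p alpha = 0 /\
       (Cmod (peval p alpha - 1) < 1)%R) ->
     (exists phi, Dpc p c phi /\ phi <> vzero) /\
     comm_on Nop (oscal (- (Ci / c)) (logop (pLop p))) (oscal (- Ci) Iop) (Dpc p c))
  /\
  ((~ exists (b : C) (m : nat), forall x : C, peval p x = b * Cpow x m) ->
     forall D : vec -> Prop,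
       is_subspace D ->
       (forall phi, D phi ->
          Eset p phi /\ dom (ocomp Nop (logop (pLop p))) phi /\
          dom (ocomp (logop (pLop p)) Nop) phi) ->
       comm_on Nop (logop (pLop p)) (oscal c Iop) D ->
       finite_dim D).
Proof.
  split; [|apply part2].
  intros [alpha [Ha [Heq Hm]]].
  destruct (eig_l2 alpha Ha) as [H1 H2].
  split.
  { exists (lincomb ((RtoC 1, fun n => Cpow alpha n) :: nil)). split.
    - exists ((RtoC 1, fun n => Cpow alpha n) :: nil). split; auto.
      constructor; [|constructor]. simpl. split. split; auto.
      exists alpha. repeat split; auto.
    - intros E. apply (f_equal (fun f => f 0%nat)) in E. simpl in E. unfold vadd, vscal, vzero in E.
      assert (E2 : RtoC 1 = RtoC 0) by (rewrite <- E; simpl; ring).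
      apply RtoC_inj in E2. lra. }
  intros f [l [Hl ->]].
  assert (HG : Good p c (lincomb l)).
  { apply Good_lincomb. eapply Forall_impl; [|exact Hl].
    intros [a g] [[Hg1 Hg2] [be [Hb1 [Hb2 [Hb3 Hb4]]]]]. simpl.
    apply (Good_eigen p c g be); auto.
    intros n. apply (f_equal (fun f => f n)) in Hb4. exact Hb4. }
  destruct HG as [Hf [HNf [a [b [Hla [Hlb [HNa Heqn]]]]]]].
  set (k := - (Ci / c)).
  split; [|split].
  - split. split. intros; apply dom_opowP; auto. exists a; auto.
    change (dom Nop (vscal k (vscal (-1) (lim_l2 (log_psum (pLop p) (lincomb l)))))).
    rewrite (lim_l2_eq _ _ Hla). split. apply in_l2_scal, in_l2_scal. apply (proj1 Hla).
    apply (in_l2_ext (vscal (k * -1) (Nv a))). intros; unfold vscal, Nv; ring. apply in_l2_scal; auto.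
  - split. split; auto. split. intros; apply dom_opowP; auto. exists b; auto.
  - change (vsub (Nv (vscal k (vscal (-1) (lim_l2 (log_psum (pLop p) (lincomb l))))))
                 (vscal k (vscal (-1) (lim_l2 (log_psum (pLop p) (Nv (lincomb l)))))) = vscal (- Ci) (lincomb l)).
    rewrite (lim_l2_eq _ _ Hla), (lim_l2_eq _ _ Hlb).
    apply vec_ext; intros n. unfold vsub, vscal, Nv.
    transitivity (k * (b n - RtoC (INR n) * a n)). ring.
    rewrite Heqn. unfold k. field. auto.
Qed.
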